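(* Let $a_0,a_1,a_2,a_3\in\mathbb{R}$ and consider the binary quartic form $$f(x,y)=-x^4+a_3x^3y+a_2x^2y^2+a_1xy^3+a_0y^4 .$$ Let $$b_1=-\tfrac14\,(4a_0+a_2^2+a_1a_3),\qquad b_2=-\tfrac{a_2}{2},\qquad \lambda_0=\frac{4b_2+2\sqrt{3b_1+4b_2^2}}{3}.$$ Then $f$ is negative semi-definite if and only if $\lambda_0$ is real and the matrix $$\begin{bmatrix}-1&\frac{a_3}{2}&\frac{a_2+\lambda_0}{2}\\[2pt] \frac{a_3}{2}&-\lambda_0&\frac{a_1}{2}\\[2pt] \frac{a_2+\lambda_0}{2}&\frac{a_1}{2}&a_0\end{bmatrix}$$ is negative semi-definite. Likewise, $f$ is negative definite if and only if $\lambda_0$ is real and this matrix is negative definite.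
   Context: A binary form $f(x,y)$ with real coefficients is negative definite (resp. negative semi-definite) if $f(x,y)<0$ (resp. $f(x,y)\le 0$) for all real $x,y$ not both zero. The quantity $\lambda_0$ is real exactly when $3b_1+4b_2^2\ge 0$. *)

(* Defs.v *)
From HB Require Import structures.
From mathcomp Require Import all_boot all_order all_algebra.
From mathcomp Require Import reals.
Set Implicit Arguments. Unset Strict Implicit. Unset Printing Implicit Defensive.
Import Order.TTheory GRing.Theory Num.Theory.
Local Open Scope ring_scope.

Definition neg_def_form (R : realType) (f : R -> R -> R) : Prop :=
  forall x y : R, (x != 0) || (y != 0) -> f x y < 0.
Definition neg_semidef_form (R : realType) (f : R -> R -> R) : Prop :=
  forall x y : R, (x != 0) || (y != 0) -> f x y <= 0.

Definition neg_def_mx (R : realType) (n : nat) (M : 'M[R]_n) : Prop :=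
  forall v : 'rV[R]_n, v != 0 -> (v *m M *m v^T) 0 0 < 0.
Definition neg_semidef_mx (R : realType) (n : nat) (M : 'M[R]_n) : Prop :=
  forall v : 'rV[R]_n, v != 0 -> (v *m M *m v^T) 0 0 <= 0.

Definition quartic (R : realType) (a0 a1 a2 a3 : R) (x y : R) : R :=
  - x ^+ 4 + a3 * x ^+ 3 * y + a2 * x ^+ 2 * y ^+ 2 + a1 * x * y ^+ 3
  + a0 * y ^+ 4.

Definition b1 (R : realType) (a0 a1 a2 a3 : R) : R :=
  - (4 * a0 + a2 ^+ 2 + a1 * a3) / 4.
Definition b2 (R : realType) (a2 : R) : R := - a2 / 2.

(* The discriminant-like quantity; lambda0 is real iff it is >= 0. *)
Definition disc (R : realType) (a0 a1 a2 a3 : R) : R :=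
  3 * b1 a0 a1 a2 a3 + 4 * b2 a2 ^+ 2.

(* lambda0 (meaningful when disc >= 0, where Num.sqrt is the real root). *)
Definition lambda0 (R : realType) (a0 a1 a2 a3 : R) : R :=
  (4 * b2 a2 + 2 * Num.sqrt (disc a0 a1 a2 a3)) / 3.

Definition Mq (R : realType) (a0 a1 a2 a3 l : R) : 'M[R]_3 :=
  \matrix_(i < 3, j < 3)
    nth 0 (nth [::] [:: [:: -1; a3 / 2; (a2 + l) / 2];
                       [:: a3 / 2; - l; a1 / 2];
                       [:: (a2 + l) / 2; a1 / 2; a0]] i) j.

(* Main.v *)
Require Import Defs.
From HB Require Import structures.
From mathcomp Require Import all_boot all_order all_algebra.
From mathcomp Require Import reals.
From mathcomp Require Import topology normedtype derive.
From mathcomp Require Import ring lra.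
Import Order.TTheory GRing.Theory Num.Theory.
Import numFieldNormedType.Exports.
Set Implicit Arguments. Unset Strict Implicit.
Local Open Scope ring_scope.
Definition pp (R : realType) (a0 a1 a2 a3 t : R) : R :=
  t ^+ 4 - a3 * t ^+ 3 - a2 * t ^+ 2 - a1 * t - a0.

Arguments pp {R}.
Lemma pp_far (R : realType) (a0 a1 a2 a3 t : R) :
  1 + `|a3| + `|a2| + `|a1| <= `|t| -> pp a0 a1 a2 a3 0 <= pp a0 a1 a2 a3 t.
Proof.
move=> Ht.
set s := `|t|.
have s1 : 1 <= s by apply: le_trans Ht; rewrite -!addrA lerDl !addr_ge0.
have e3 : a3 * t ^+ 3 <= `|a3| * s ^+ 3.
  by rewrite /s -normrX -normrM ler_norm.
have e2 : a2 * t ^+ 2 <= `|a2| * s ^+ 2.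
  by rewrite /s -normrX -normrM ler_norm.
have e1 : a1 * t <= `|a1| * s.
  by rewrite /s -normrM ler_norm.
have t4 : t ^+ 4 = s ^+ 4 by rewrite /s -normrX ger0_norm // exprn_even_ge0.
have h3 := normr_ge0 a3; have h2 := normr_ge0 a2; have h1 := normr_ge0 a1.
rewrite /pp t4.
have s2 : s <= s ^+ 2 by rewrite [s ^+ 2]expr2; nra.
have s3 : s ^+ 2 <= s ^+ 3.
  rewrite [s ^+ 3]exprS [s ^+ 2]expr2. nra.
have s4 : (1 + `|a3| + `|a2| + `|a1|) * s ^+ 3 <= s ^+ 4.
  by rewrite (exprS s 3) ler_wpM2r // exprn_ge0 // (le_trans ler01 s1).
have : `|a2| * s^+2 <= `|a2| * s^+3 by rewrite ler_wpM2l.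
have : `|a1| * s <= `|a1| * s^+3 by rewrite ler_wpM2l // (le_trans s2 s3).
have : 0 <= s ^+ 3 by rewrite exprn_ge0 // (le_trans ler01 s1).
rewrite expr0n /=.
nra.
Qed.

Lemma pp_min (R : realType) (a0 a1 a2 a3 : R) :
  exists t0, forall t, pp a0 a1 a2 a3 t0 <= pp a0 a1 a2 a3 t.
Proof.
set K := 1 + `|a3| + `|a2| + `|a1|.
have K0 : 0 <= K by rewrite !addr_ge0.
pose P : {poly R} := 'X ^+ 4 - a3%:P * 'X ^+ 3 - a2%:P * 'X ^+ 2 - a1%:P * 'X - a0%:P.
have PE : forall t, P.[t] = pp a0 a1 a2 a3 t.
  by move=> t; rewrite /P !(hornerD, hornerN, hornerM, hornerC, hornerX, hornerXn) /pp.
have hab : - K <= K by move: K0; clear; lra.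
have [c cK minc] := EVT_min hab (continuous_subspaceT (@continuous_horner R P)).
exists c => t.
rewrite -!PE.
have [tK|tK] := leP `|t| K.
  by apply: minc; rewrite in_itv /= -ler_norml.
apply: le_trans (minc 0 _) _; first by rewrite in_itv /= oppr_le0 K0.
rewrite !PE; apply: pp_far; exact: ltW.
Qed.
Lemma form2 (R : realType) (al be ga x y : R) : 0 <= al -> 0 <= ga ->
  be ^+ 2 <= 4 * al * ga -> 0 <= al * x ^+ 2 + be * x * y + ga * y ^+ 2.
Proof.
move=> ha hg hd.
have [a0|apos] := eqVneq al 0.
  subst al.
  have hb : be = 0.
    apply/eqP; rewrite -sqrf_eq0 eq_le sqr_ge0 andbT.
    by move: hd; rewrite mulr0 mul0r.
  subst be; rewrite !mul0r !add0r; apply: mulr_ge0 => //; exact: sqr_ge0.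
have ap : 0 < al by rewrite lt_def apos ha.
have key : 4 * al * (al * x ^+ 2 + be * x * y + ga * y ^+ 2) =
   (2 * al * x + be * y) ^+ 2 + (4 * al * ga - be ^+ 2) * y ^+ 2 by ring.
have : 0 <= 4 * al * (al * x ^+ 2 + be * x * y + ga * y ^+ 2).
  rewrite key; apply: addr_ge0; first exact: sqr_ge0.
  apply: mulr_ge0; [by rewrite subr_ge0 | exact: sqr_ge0].
rewrite pmulr_rge0 //; nra.
Qed.

Lemma form2_strict (R : realType) (al be ga x y : R) : 0 < al ->
  be ^+ 2 < 4 * al * ga -> (x != 0) || (y != 0) ->
  0 < al * x ^+ 2 + be * x * y + ga * y ^+ 2.
Proof.
move=> ap hd hxy.
have key : 4 * al * (al * x ^+ 2 + be * x * y + ga * y ^+ 2) =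
   (2 * al * x + be * y) ^+ 2 + (4 * al * ga - be ^+ 2) * y ^+ 2 by ring.
have [y0|yn] := eqVneq y 0.
  subst y; rewrite eqxx orbF in hxy.
  rewrite !(mulr0, expr0n) /= !addr0; apply: mulr_gt0 => //.
  by rewrite exprn_even_gt0.
have : 0 < 4 * al * (al * x ^+ 2 + be * x * y + ga * y ^+ 2).
  rewrite key; apply: ltr_wpDl; first exact: sqr_ge0.
  apply: mulr_gt0; [by rewrite subr_gt0 | by rewrite exprn_even_gt0].
rewrite pmulr_rgt0 //; nra.
Qed.

Lemma ineqs (R : realType) (e m S z : R) : 0 <= m -> 0 <= S ->
  S ^+ 2 = e ^+ 2 + 12 * m -> 0 <= z -> z <= e ->
  [/\ 0 <= (2 * e + S) / 3 - z, 0 <= m - ((S - e) / 3) ^+ 2 / 4 &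
   z * ((S - e) / 3) ^+ 2 <= 4 * ((2 * e + S) / 3 - z) * (m - ((S - e) / 3) ^+ 2 / 4)].
Proof.
move=> hm hS hSe hz hze.
have he : 0 <= e by lra.
have hSe2 : e <= S by nra.
have f0 : (S - e) * (S + e) = 12 * m.
  have -> : (S - e) * (S + e) = S ^+ 2 - e ^+ 2 by ring.
  by rewrite hSe; ring.
have f1 : (S - e) ^+ 2 <= 12 * m by rewrite -f0; nra.
have f2 : e * (S - e) <= 12 * m by rewrite -f0; nra.
split.
- lra.
- nra.
- set d := (S - e) / 3.
  set l := (2 * e + S) / 3.
  have hd : 0 <= d by rewrite /d; lra.
  have hld : l - e = d by rewrite /l /d; field.
  have h9 : 9 * l * d = 12 * m + e * (S - e).
    have -> : 9 * l * d = S ^+ 2 + e * S - 2 * e ^+ 2 by rewrite /l /d; field.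
    by rewrite hSe; ring.
  have hl : 0 <= l by rewrite /l; lra.
  have : l * d <= 4 * m by lra.
  nra.
Qed.

Lemma ineqs_strict (R : realType) (e m S z : R) : 0 < m -> 0 <= S ->
  S ^+ 2 = e ^+ 2 + 12 * m -> 0 <= z -> z <= e ->
  0 < (2 * e + S) / 3 - z /\
   z * ((S - e) / 3) ^+ 2 < 4 * ((2 * e + S) / 3 - z) * (m - ((S - e) / 3) ^+ 2 / 4).
Proof.
move=> hm hS hSe hz hze.
have he : 0 <= e by lra.
have hSe2 : e < S by nra.
have f0 : (S - e) * (S + e) = 12 * m.
  have -> : (S - e) * (S + e) = S ^+ 2 - e ^+ 2 by ring.
  by rewrite hSe; ring.
have f2 : e * (S - e) <= 12 * m by rewrite -f0; nra.
set d := (S - e) / 3.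
set l := (2 * e + S) / 3.
have hd : 0 < d by rewrite /d; lra.
have hld : l - e = d by rewrite /l /d; field.
have h9 : 9 * l * d = 12 * m + e * (S - e).
  have -> : 9 * l * d = S ^+ 2 + e * S - 2 * e ^+ 2 by rewrite /l /d; field.
  by rewrite hSe; ring.
have hl : 0 <= l by rewrite /l; lra.
have : l * d < 4 * m by lra.
split; [lra | nra].
Qed.


Definition Qf (R : realType) (a0 a1 a2 a3 l u v w : R) : R :=
  u ^+ 2 - a3 * u * v - (a2 + l) * u * w + l * v ^+ 2 - a1 * v * w - a0 * w ^+ 2.
Arguments Qf {R}.

Lemma mxQ (R : realType) (a0 a1 a2 a3 l : R) (v : 'rV[R]_3) :
  (v *m Mq a0 a1 a2 a3 l *m v^T) 0 0 =
  - Qf a0 a1 a2 a3 l (v 0 ord0) (v 0 (lift ord0 ord0)) (v 0 (lift ord0 (lift ord0 ord0))).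
Proof.
rewrite !mxE !big_ord_recl !big_ord0 !mxE !big_ord_recl !big_ord0 !mxE /=.
by rewrite /Qf; field.
Qed.

Lemma crit_pos (R : realType) (c1 c2 c3 : R) :
  (forall u, 0 <= u * (c1 + u * (c2 + c3 * u + u ^+ 2))) -> ~ 0 < c1.
Proof.
move=> H c1p.
set B := 1 + `|c2| + `|c3| + c1.
have B0 : 0 < B by rewrite /B; have := normr_ge0 c2; have := normr_ge0 c3; lra.
set ep := c1 / (2 * B).
have ep0 : 0 < ep by rewrite /ep divr_gt0 // mulr_gt0.
have epB : ep * (2 * B) = c1 by rewrite /ep mulfVK // mulf_neq0 // gt_eqF.
have hc2 := ler_norm c2; have hc3 := ler_norm c3.
have hn3 := normr_ge0 c3; have hn2 := normr_ge0 c2.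
have B1 : c1 < 2 * B by rewrite /B; lra.
have ep1 : ep <= 1.
  rewrite -(@ler_pM2r _ (2 * B)) ?mul1r ?epB; [lra | by rewrite mulr_gt0].
have q1 : c2 - c3 * ep + ep ^+ 2 <= `|c2| + `|c3| + 1.
  have hh := ler_norm (- c3); rewrite normrN in hh.
  have : - c3 * ep <= `|c3| by nra.
  nra.
have := H (- ep).
have -> : - ep * (c1 + - ep * (c2 + c3 * - ep + (- ep) ^+ 2)) =
   - ep * c1 + ep ^+ 2 * (c2 - c3 * ep + ep ^+ 2) by ring.
have : ep ^+ 2 * (c2 - c3 * ep + ep ^+ 2) <= ep ^+ 2 * (`|c2| + `|c3| + 1).
  by rewrite ler_wpM2l // sqr_ge0.
rewrite /B in epB.
nra.
Qed.

Lemma crit (R : realType) (c1 c2 c3 : R) :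
  (forall u, 0 <= u * (c1 + u * (c2 + c3 * u + u ^+ 2))) -> c1 = 0 /\ c3 ^+ 2 <= 4 * c2.
Proof.
move=> H.
have c10 : c1 = 0.
  have [c1p|c1n|//] := ltgtP 0 c1.
    by case: (@crit_pos _ c1 c2 c3 H c1p).
  have H' : forall u, 0 <= u * (- c1 + u * (c2 + (- c3) * u + u ^+ 2)).
    move=> u; have := H (- u).
    have -> : - u * (c1 + - u * (c2 + c3 * - u + (- u) ^+ 2)) =
      u * (- c1 + u * (c2 + (- c3) * u + u ^+ 2)) by ring.
    done.
  by case: (@crit_pos _ _ _ _ H'); rewrite oppr_gt0.
split => //; subst c1.
rewrite leNgt; apply/negP => hlt.
have [c30|c3n] := eqVneq c3 0.
  subst c3.
  have c2n : c2 < 0 by move: hlt; rewrite expr0n /=; lra.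
  set u := - c2 / (1 - c2).
  have d0 : 0 < 1 - c2 by lra.
  have u0 : 0 < u by rewrite /u divr_gt0 // oppr_gt0.
  have uE : u * (1 - c2) = - c2 by rewrite /u mulfVK // gt_eqF.
  have u1 : u < 1 by nra.
  have u2 : u ^+ 2 < - c2 by rewrite expr2; nra.
  have := H u.
  have : 0 < u * (u * (- c2 - u ^+ 2)).
    by apply: mulr_gt0 => //; apply: mulr_gt0 => //; lra.
  rewrite mul0r. lra.
have := H (- c3 / 2).
have -> : - c3 / 2 * (0 + - c3 / 2 * (c2 + c3 * (- c3 / 2) + (- c3 / 2) ^+ 2)) =
  (c3 ^+ 2 / 4) * (c2 - c3 ^+ 2 / 4) by field.
have c3p : 0 < c3 ^+ 2 / 4 by rewrite divr_gt0 // exprn_even_gt0.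
nra.
Qed.

Lemma core (R : realType) (a0 a1 a2 a3 t0 : R) :
  a1 = 4 * t0 ^+ 3 - 3 * a3 * t0 ^+ 2 - 2 * a2 * t0 ->
  (4 * t0 - a3) ^+ 2 <= 4 * (6 * t0 ^+ 2 - 3 * a3 * t0 - a2) ->
  0 <= t0 ^+ 4 - a3 * t0 ^+ 3 - a2 * t0 ^+ 2 - a1 * t0 - a0 ->
  [/\ 0 <= disc a0 a1 a2 a3,
      forall u v w, 0 <= Qf a0 a1 a2 a3 (lambda0 a0 a1 a2 a3) u v w &
      0 < t0 ^+ 4 - a3 * t0 ^+ 3 - a2 * t0 ^+ 2 - a1 * t0 - a0 ->
      forall u v w, [|| u != 0, v != 0 | w != 0] ->
        0 < Qf a0 a1 a2 a3 (lambda0 a0 a1 a2 a3) u v w].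
Proof.
move=> ha1 hE hm0.
set m := t0 ^+ 4 - a3 * t0 ^+ 3 - a2 * t0 ^+ 2 - a1 * t0 - a0 in hm0 *.
set e := 6 * t0 ^+ 2 - 3 * a3 * t0 - a2 in hE.
set E3 := 4 * t0 - a3 in hE.
have hdisc : 4 * disc a0 a1 a2 a3 = e ^+ 2 + 12 * m.
  by rewrite /disc /b1 /b2 /m /e ha1; field.
have dpos : 0 <= disc a0 a1 a2 a3.
  have : 0 <= e ^+ 2 + 12 * m by have := sqr_ge0 e; lra.
  by rewrite -hdisc; lra.
set S := 2 * Num.sqrt (disc a0 a1 a2 a3).
have S0 : 0 <= S by rewrite /S mulr_ge0 // sqrtr_ge0.
have SS : S ^+ 2 = e ^+ 2 + 12 * m.
  by rewrite /S exprMn sqr_sqrtr // -hdisc; ring.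
have hl0 : lambda0 a0 a1 a2 a3 = (- 2 * a2 + S) / 3.
  by rewrite /lambda0 /b2 /S; field.
set z := E3 ^+ 2 / 4.
have z0 : 0 <= z by rewrite /z divr_ge0 // sqr_ge0.
have ze : z <= e by rewrite /z; lra.
set al := (2 * e + S) / 3 - z.
set be := E3 * ((S - e) / 3) / 2.
set ga := m - ((S - e) / 3) ^+ 2 / 4.
have hbe : be ^+ 2 = z * ((S - e) / 3) ^+ 2 by rewrite /be /z; field.
have key : forall u v w, Qf a0 a1 a2 a3 (lambda0 a0 a1 a2 a3) u v w =
   ((u - 2 * t0 * v + t0 ^+ 2 * w) + E3 / 2 * (v - t0 * w) - (S - e) / 3 / 2 * w) ^+ 2
   + (al * (v - t0 * w) ^+ 2 + be * (v - t0 * w) * w + ga * w ^+ 2).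
  by move=> u v w; rewrite hl0 /Qf /al /be /ga /z /E3 /e /m ha1; field.
split; first exact: dpos.
- move=> u v w; rewrite key; apply: addr_ge0; first exact: sqr_ge0.
  have [h1 h2 h3] := ineqs hm0 S0 SS z0 ze.
  by apply: form2 => //; rewrite hbe.
- move=> mpos u v w huvw; rewrite key.
  have [h1 h3] := ineqs_strict mpos S0 SS z0 ze.
  have [hw|hw] := boolP ((v - t0 * w != 0) || (w != 0)).
    apply: ltr_wpDl; first exact: sqr_ge0.
    by apply: form2_strict => //; rewrite hbe.
  move: hw; rewrite negb_or !negbK => /andP[/eqP h1' /eqP h2'].
  subst w; move: h1'; rewrite mulr0 subr0 => h1'; subst v.
  rewrite !(mulr0, subr0, addr0, expr0n) /=.
  move: huvw; rewrite eqxx /= orbF => hu.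
  by rewrite exprn_even_gt0.
Qed.

Lemma rv3_nz (R : realType) (v : 'rV[R]_3) : v != 0 ->
  [|| v 0 ord0 != 0, v 0 (lift ord0 ord0) != 0 | v 0 (lift ord0 (lift ord0 ord0)) != 0].
Proof.
apply: contraNT; rewrite !negb_or !negbK => /and3P[/eqP h0 /eqP h1 /eqP h2].
apply/eqP/rowP => i; rewrite mxE.
case: i => [[|[|[|//]]] Hi].
- by rewrite -h0; congr (v _ _); apply: val_inj.
- by rewrite -h1; congr (v _ _); apply: val_inj.
- by rewrite -h2; congr (v _ _); apply: val_inj.
Qed.

Definition mkv (R : realType) (x y : R) : 'rV[R]_3 :=
  \row_(j < 3) nth 0 [:: x ^+ 2; x * y; y ^+ 2] j.

Lemma mkv_nz (R : realType) (x y : R) : (x != 0) || (y != 0) -> mkv x y != 0.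
Proof.
case/orP => h; apply/eqP => e.
- have := congr1 (fun M : 'rV[R]_3 => M 0 ord0) e; rewrite !mxE /=.
  by move/eqP; rewrite sqrf_eq0 (negbTE h).
- have := congr1 (fun M : 'rV[R]_3 => M 0 (lift ord0 (lift ord0 ord0))) e.
  rewrite !mxE /=.
  by move/eqP; rewrite sqrf_eq0 (negbTE h).
Qed.

Lemma fwd (R : realType) (a0 a1 a2 a3 : R) :
  (forall t, 0 <= pp a0 a1 a2 a3 t) ->
  exists t0, [/\ a1 = 4 * t0 ^+ 3 - 3 * a3 * t0 ^+ 2 - 2 * a2 * t0,
    (4 * t0 - a3) ^+ 2 <= 4 * (6 * t0 ^+ 2 - 3 * a3 * t0 - a2) &
    pp a0 a1 a2 a3 t0 = t0 ^+ 4 - a3 * t0 ^+ 3 - a2 * t0 ^+ 2 - a1 * t0 - a0].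
Proof.
move=> hpp.
have [t0 ht0] := pp_min a0 a1 a2 a3.
exists t0.
have H : forall u, 0 <= u * ((4 * t0 ^+ 3 - 3 * a3 * t0 ^+ 2 - 2 * a2 * t0 - a1) +
    u * ((6 * t0 ^+ 2 - 3 * a3 * t0 - a2) + (4 * t0 - a3) * u + u ^+ 2)).
  move=> u; have := ht0 (t0 + u).
  have -> : pp a0 a1 a2 a3 (t0 + u) = pp a0 a1 a2 a3 t0 + u * ((4 * t0 ^+ 3 - 3 * a3 * t0 ^+ 2 - 2 * a2 * t0 - a1) +
    u * ((6 * t0 ^+ 2 - 3 * a3 * t0 - a2) + (4 * t0 - a3) * u + u ^+ 2)) by rewrite /pp; ring.
  lra.
have [h1 h2] := crit H.
split => //; first lra.
Qed.

Theorem corollary1 (R : realType) (a0 a1 a2 a3 : R) :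
  (neg_semidef_form (quartic a0 a1 a2 a3) <->
     0 <= disc a0 a1 a2 a3 /\
     neg_semidef_mx (Mq a0 a1 a2 a3 (lambda0 a0 a1 a2 a3))) /\
  (neg_def_form (quartic a0 a1 a2 a3) <->
     0 <= disc a0 a1 a2 a3 /\
     neg_def_mx (Mq a0 a1 a2 a3 (lambda0 a0 a1 a2 a3))).
Proof.
have Qq : forall l x y, Qf a0 a1 a2 a3 l (x ^+ 2) (x * y) (y ^+ 2) = - quartic a0 a1 a2 a3 x y.
  by move=> l x y; rewrite /Qf /quartic; ring.
have qp : forall t, quartic a0 a1 a2 a3 t 1 = - pp a0 a1 a2 a3 t.
  by move=> t; rewrite /quartic /pp; ring.
have mkvQ : forall l x y, (mkv x y *m Mq a0 a1 a2 a3 l *m (mkv x y)^T) 0 0 =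
    quartic a0 a1 a2 a3 x y.
  by move=> l x y; rewrite mxQ !mxE /= Qq opprK.
have h10 : ((1 : R) != 0) by rewrite oner_eq0.
split; split.
- move=> H.
  have hpp : forall t, 0 <= pp a0 a1 a2 a3 t.
    by move=> t; have := H t 1; rewrite h10 orbT qp oppr_le0 => /(_ isT).
  have [t0 [ha1 hE hm]] := fwd hpp.
  have hm0 := hpp t0; rewrite hm in hm0.
  have [d1 d2 _] := core ha1 hE hm0.
  split => // v _; rewrite mxQ oppr_le0; exact: d2.
- case=> _ H x y hxy; rewrite -(mkvQ (lambda0 a0 a1 a2 a3)); exact: H (mkv_nz hxy).
- move=> H.
  have hpp : forall t, 0 < pp a0 a1 a2 a3 t.
    by move=> t; have := H t 1; rewrite h10 orbT qp oppr_lt0 => /(_ isT).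
  have [t0 [ha1 hE hm]] := fwd (fun t => ltW (hpp t)).
  have hm0 := hpp t0; rewrite hm in hm0.
  have [d1 _ d3] := core ha1 hE (ltW hm0).
  split => // v hv; rewrite mxQ oppr_lt0; apply: d3; first exact: hm0.
  exact: rv3_nz.
- case=> _ H x y hxy; rewrite -(mkvQ (lambda0 a0 a1 a2 a3)); exact: H (mkv_nz hxy).
Qed.
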